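(* Let $\sigma$ be a relational vocabulary, let $\mathscr{A}$ be a finite $\sigma$-structure with universe $A$, and let $k>0$. There is a bijective correspondence between (1) $\mathbb{E}_k$-coalgebras $\alpha : \mathscr{A} \to \mathbb{E}_k \mathscr{A}$, and (2) forest covers of the Gaifman graph $\mathcal{G}(\mathscr{A})$ of height $\leq k$.
   Context: A relational vocabulary $\sigma$ is a set of relation symbols $R$, each with an arity $n>0$. A $\sigma$-structure $\mathscr{A}$ consists of a universe $A$ and relations $R^{\mathscr{A}} \subseteq A^n$ for each $R\in\sigma$ of arity $n$. A homomorphism $f:\mathscr{A}\to\mathscr{B}$ is a function $f:A\to B$ with $(a_1,\dots,a_n)\in R^{\mathscr{A}} \Rightarrow (f(a_1),\dots,f(a_n))\in R^{\mathscr{B}}$; these form the category $\mathcal{R}(\sigma)$. The Ehrenfeucht–Fraïssé comonad $\mathbb{E}_k$ on $\mathcal{R}(\sigma)$: the universe of $\mathbb{E}_k\mathscr{A}$ is $A^{\leq k}$, the set of non-empty sequences of elements of $A$ of length $\leq k$. For $R\in\sigma$ of arity $n$, $R^{\mathbb{E}_k\mathscr{A}}$ is the set of tuples $(s_1,\dots,s_n)$ of such sequences which are pairwise comparable in the prefix order $\sqsubseteq$ and satisfy $R^{\mathscr{A}}(\varepsilon_{\mathscr{A}}(s_1),\dots,\varepsilon_{\mathscr{A}}(s_n))$, where the counit $\varepsilon_{\mathscr{A}}:\mathbb{E}_k\mathscr{A}\to\mathscr{A}$ sends $[a_1,\dots,a_n]$ to $a_n$. On a homomorphism $h$, $\mathbb{E}_k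 h[a_1,\dots,a_j]=[h(a_1),\dots,h(a_j)]$; the comultiplication $\delta_{\mathscr{A}}:\mathbb{E}_k\mathscr{A}\to\mathbb{E}_k\mathbb{E}_k\mathscr{A}$ sends $[a_1,\dots,a_j]$ to $[[a_1],[a_1,a_2],\dots,[a_1,\dots,a_j]]$. An $\mathbb{E}_k$-coalgebra on $\mathscr{A}$ is a homomorphism $\alpha:\mathscr{A}\to\mathbb{E}_k\mathscr{A}$ with $\delta_{\mathscr{A}}\circ\alpha=\mathbb{E}_k\alpha\circ\alpha$ and $\varepsilon_{\mathscr{A}}\circ\alpha=\mathrm{id}_{\mathscr{A}}$. The Gaifman graph $\mathcal{G}(\mathscr{A})=(A,\frown)$ has $a\frown a'$ iff for some $R\in\sigma$ and some $(a_1,\dots,a_n)\in R^{\mathscr{A}}$, $a=a_i$, $a'=a_j$ with $i\neq j$. In a poset, $x\uparrow y$ means $x\leq y$ or $y\leq x$; a chain is a subset whose elements are pairwise comparable. A forest is a poset $(F,\leq)$ in which the set of predecessors of every element is a finite chain; its height is $\sup_C|C|$ over chains $C$. A forest cover of a graph $G=(V,\frown)$ is a forest $(F,\leq)$ with $V\subseteq F$ such that $v\frown v'$ implies $v\uparrow v'$. *)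

(* Defs.v *)
From mathcomp Require Import all_boot zify.
Set Implicit Arguments. Unset Strict Implicit. Unset Printing Implicit Defensive.

Record vocab := Vocab {
  sym :> Type;
  ar : sym -> nat;
  ar_gt0 : forall R, 0 < ar R }.

Definition structure (s : vocab) (T : Type) := forall R : s, (ar R).-tuple T -> Prop.

Definition is_hom (s : vocab) (T U : Type) (A : structure s T) (B : structure s U)
  (f : T -> U) : Prop :=
  forall (R : s) (t : (ar R).-tuple T), A R t -> B R (map_tuple f t).

Definition Ek (T : Type) (k : nat) := {x : seq T | 0 < size x <= k}.

Definition seq_prefix (T : Type) (s t : seq T) : Prop := exists u, t = s ++ u.
Definition seq_comparable (T : Type) (s t : seq T) : Prop :=
  seq_prefix s t \/ seq_prefix t s.

Lemma false_neq_true : false <> true. Proof. by []. Qed.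

Definition eps (T : Type) (k : nat) (s : Ek T k) : T :=
  match s with
  | exist l h =>
    match l return (0 < size l <= k) -> T with
    | [::] => fun h => False_rect T (false_neq_true h)
    | x :: l' => fun _ => last x l'
    end h
  end.

Definition Ekmap (T U : Type) (k : nat) (h : T -> U) (s : Ek T k) : Ek U k :=
  exist _ (map h (sval s)) (eq_ind_r (fun n => 0 < n <= k) (proj2_sig s) (size_map h (sval s))).

Definition prefixes (T : Type) (s : seq T) : seq (seq T) :=
  [seq take i s | i <- iota 1 (size s)].

Lemma size_pmap_prefixes (T : Type) (k : nat) (s : Ek T k) :
  0 < size (pmap (insub : seq T -> option (Ek T k)) (prefixes (sval s))) <= k.
Proof.
case: s => l /= /andP [l0 lk].
rewrite size_pmap_sub.
have -> : count (fun x : seq T => 0 < size x <= k) (prefixes l) = size l.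
  rewrite /prefixes count_map.
  rewrite -[RHS](size_iota 1); apply/eqP; rewrite -all_count; apply/allP => i.
  rewrite mem_iota => /andP [i1 il]; rewrite /= size_take.
  rewrite add1n ltnS in il.
  by case: (ltnP i (size l)) => _; lia.
by rewrite l0 lk.
Qed.

Definition delta (T : Type) (k : nat) (s : Ek T k) : Ek (Ek T k) k :=
  exist _ (pmap insub (prefixes (sval s))) (size_pmap_prefixes s).

Definition Ek_struct (s : vocab) (T : Type) (A : structure s T) (k : nat)
  : structure s (Ek T k) :=
  fun R t =>
    (forall i j : 'I_(ar R), seq_comparable (sval (tnth t i)) (sval (tnth t j)))
    /\ A R (map_tuple (@eps T k) t).

Arguments Ek_struct {s T} A k.

Definition Ek_coalgebra (s : vocab) (T : Type) (A : structure s T) (k : nat)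
  (alpha : T -> Ek T k) : Prop :=
  [/\ is_hom A (Ek_struct A k) alpha,
      (forall a, delta (alpha a) = Ekmap alpha (alpha a)) &
      (forall a, eps (alpha a) = a)].

Definition gaifman_adj (s : vocab) (T : Type) (A : structure s T) (a a' : T) : Prop :=
  exists (R : s) (t : (ar R).-tuple T) (i j : 'I_(ar R)),
    [/\ A R t, i != j, a = tnth t i & a' = tnth t j].

Definition is_forest (T : finType) (le : rel T) : Prop :=
  [/\ reflexive le, antisymmetric le, transitive le,
      (forall x, exists l : seq T, forall y, le y x -> y \in l) &
      (forall x y z, le y x -> le z x -> le y z || le z y)].

Definition is_chain (T : finType) (le : rel T) (C : {set T}) : Prop :=
  forall x y, x \in C -> y \in C -> le x y || le y x.

Definition height_le (T : finType) (le : rel T) (k : nat) : Prop :=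
  forall C : {set T}, is_chain le C -> #|C| <= k.

Definition forest_cover (s : vocab) (T : finType) (A : structure s T) (le : rel T) : Prop :=
  is_forest le /\ (forall a a', gaifman_adj A a a' -> le a a' || le a' a).

(* Main.v *)
Require Import Defs.
From mathcomp Require Import all_boot zify.
From Stdlib Require Import ProofIrrelevance FunctionalExtensionality.
Set Implicit Arguments. Unset Strict Implicit. Unset Printing Implicit Defensive.

Lemma eps_last (T : Type) (k : nat) (s : Ek T k) y : eps s = last y (sval s).
Proof. by case: s => [[|x l] h] //=. Qed.

Lemma Ek_eq (T : Type) (k : nat) (x y : Ek T k) : sval x = sval y -> x = y.
Proof.
case: x y => [a ha] [b hb] /= eab; subst; f_equal; apply: bool_irrelevance.
Qed.

Lemma sig_eq (U : Type) (P : U -> Prop) (x y : {a | P a}) : sval x = sval y -> x = y.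
Proof. case: x y => [a ha] [b hb] /= eab; subst; f_equal; apply: proof_irrelevance. Qed.

Lemma prefixes_eq (T : Type) (f : T -> seq T) (l : seq T) (x0 : T) :
  (forall i, i < size l -> f (nth x0 l i) = take i.+1 l) -> map f l = prefixes l.
Proof.
move=> H; rewrite /prefixes -{1}(mkseq_nth x0 l) /mkseq -map_comp.
rewrite (iotaDl 1 0); rewrite -map_comp; apply/eq_in_map => i.
by rewrite mem_iota add0n => /andP [_ hi] /=; rewrite H.
Qed.

Lemma prefixes_nth (T : Type) (f : T -> seq T) (l : seq T) (x0 : T) :
  map f l = prefixes l -> forall i, i < size l -> f (nth x0 l i) = take i.+1 l.
Proof.
move=> E i hi; have := congr1 (fun s => nth [::] s i) E.
by rewrite /= (nth_map x0) // /prefixes (nth_map 0) ?size_iota // nth_iota // add1n.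
Qed.

Lemma map_size_prefixes (T : Type) (l : seq T) : map size (prefixes l) = iota 1 (size l).
Proof.
rewrite /prefixes -map_comp -[RHS]map_id; apply/eq_in_map => i.
by rewrite mem_iota => /andP [h1 h2] /=; rewrite size_takel //; rewrite add1n ltnS in h2.
Qed.

Lemma sorted_prefixes (T : eqType) (f : T -> seq T) (l : seq T) (x0 : T) :
  map f l = prefixes l -> sorted (fun a b => prefix (f a) (f b)) l.
Proof.
move=> E; apply/(sortedP x0) => i hi.
rewrite !(@prefixes_nth _ f l x0 E) //; last exact: ltnW.
by rewrite -(take_takel l (leqnSn i.+1)) prefix_take.
Qed.

Lemma filter_prefixes (T : Type) (k : nat) (l : seq T) : 0 < size l <= k ->
  [seq x <- prefixes l | 0 < size x <= k] = prefixes l.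
Proof.
move=> /andP [h0 hk]; apply/all_filterP; rewrite /prefixes all_map; apply/allP => i.
rewrite mem_iota add1n ltnS => /andP [h1 h2] /=.
by rewrite size_takel // h1 (leq_trans h2 hk).
Qed.

Lemma prefix_comparable (T : eqType) (a b c : seq T) :
  prefix a c -> prefix b c -> prefix a b || prefix b a.
Proof.
wlog h : a b / size a <= size b.
  move=> W ha hb; case: (leqP (size a) (size b)) => h; first exact: W.
  by rewrite orbC; apply: W => //; apply: ltnW.
rewrite !prefixE => /eqP ha /eqP hb; apply/orP; left.
by rewrite -[b in take _ b]hb take_takel // ha.
Qed.

Lemma prefix_same_size (T : eqType) (a b : seq T) :
  prefix a b -> size a = size b -> a = b.
Proof.
move=> /prefixP [u ->]; rewrite size_cat => /eqP.
by rewrite -{1}[size a]addn0 eqn_add2l eq_sym size_eq0 => /eqP ->; rewrite cats0.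
Qed.

Lemma prefix_antisym (T : eqType) (a b : seq T) :
  prefix a b -> prefix b a -> a = b.
Proof.
move=> hab hba; apply: prefix_same_size => //.
move: hab hba => /prefixP [u ->] /prefixP [v] /(congr1 size).
rewrite !size_cat; lia.
Qed.

Definition le_of (T : finType) (k : nat) (alpha : T -> Ek T k) : rel T :=
  fun a b => prefix (sval (alpha a)) (sval (alpha b)).

Lemma coal_last (s : vocab) (T : finType) (A : structure s T) (k : nat)
  (alpha : T -> Ek T k) (H : Ek_coalgebra A alpha) a y :
  last y (sval (alpha a)) = a.
Proof. by case: H => _ _ /(_ a); rewrite (eps_last _ y). Qed.

Lemma coal_map (s : vocab) (T : finType) (A : structure s T) (k : nat)
  (alpha : T -> Ek T k) (H : Ek_coalgebra A alpha) a :
  map (fun x => sval (alpha x)) (sval (alpha a)) = prefixes (sval (alpha a)).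
Proof.
case: H => _ /(_ a) /(congr1 (fun x => map val (sval x))) /= E _.
rewrite map_comp -E (pmap_filter (@insubK _ _ _)).
rewrite (eq_filter (isSome_insub _)); apply: filter_prefixes.
exact: (svalP (alpha a)).
Qed.

Lemma coal_mem (s : vocab) (T : finType) (A : structure s T) (k : nat)
  (alpha : T -> Ek T k) (H : Ek_coalgebra A alpha) a b :
  (b \in sval (alpha a)) = le_of alpha b a.
Proof.
apply/idP/idP => [hb | /prefixP [u e]].
  rewrite /le_of -(nth_index b hb).
  rewrite (@prefixes_nth _ _ _ b (coal_map H a)) ?index_mem //.
  exact: prefix_take.
rewrite e mem_cat; apply/orP; left.
case e': (sval (alpha b)) => [|c l].
  by move: (svalP (alpha b)); rewrite e'.
by have := coal_last H b c; rewrite e' /= => <-; apply: mem_last.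
Qed.

Lemma coal_uniq (s : vocab) (T : finType) (A : structure s T) (k : nat)
  (alpha : T -> Ek T k) (H : Ek_coalgebra A alpha) a :
  uniq (sval (alpha a)).
Proof.
have := congr1 (map size) (coal_map H a).
rewrite map_size_prefixes -map_comp => E.
by have := iota_uniq 1 (size (sval (alpha a))); rewrite -E => /map_uniq.
Qed.

Lemma coal_sorted (s : vocab) (T : finType) (A : structure s T) (k : nat)
  (alpha : T -> Ek T k) (H : Ek_coalgebra A alpha) a :
  sorted (le_of alpha) (sval (alpha a)).
Proof. exact: (sorted_prefixes a (coal_map H a)). Qed.

Lemma coal_inj (s : vocab) (T : finType) (A : structure s T) (k : nat)
  (alpha : T -> Ek T k) (H : Ek_coalgebra A alpha) a b :
  sval (alpha a) = sval (alpha b) -> a = b.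
Proof. by move=> e; rewrite -(coal_last H a a) -(coal_last H b a) e. Qed.

Lemma le_of_ok (s : vocab) (T : finType) (A : structure s T) (k : nat)
  (alpha : T -> Ek T k) (H : Ek_coalgebra A alpha) :
  forest_cover A (le_of alpha) /\ height_le (le_of alpha) k.
Proof.
split; first split.
- split.
  + by move=> x; apply: prefix_refl.
  + move=> x y /andP [h1 h2]; apply: (coal_inj H); exact: prefix_antisym.
  + by move=> x y z h1 h2; apply: prefix_trans h1 h2.
  + by move=> x; exists (enum T) => y _; rewrite mem_enum.
  + by move=> x y z; apply: prefix_comparable.
- move=> a a' [R [t [i [j [At _ -> ->]]]]].
  case: H => /(_ R t At) [/(_ i j) + _] _ _; rewrite !tnth_map.
  by case=> /prefixP h; apply/orP; [left | right].
- move=> C hC; rewrite cardE.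
  have U : uniq (map (fun x => size (sval (alpha x))) (enum C)).
    rewrite map_inj_in_uniq ?enum_uniq // => x y; rewrite !mem_enum => hx hy e.
    apply: (coal_inj H); case/orP: (hC x y hx hy) => h.
      exact: prefix_same_size.
    by apply/esym; apply: prefix_same_size.
  have : size (map (fun x => size (sval (alpha x))) (enum C)) <= size (iota 1 k).
    apply: uniq_leq_size U _ => n /mapP [x _ ->].
    rewrite mem_iota add1n ltnS; exact: (svalP (alpha x)).
  by rewrite size_map size_iota.
Qed.

Lemma in_split (T : eqType) (x : T) (s : seq T) :
  x \in s -> exists s1 s2, s = s1 ++ x :: s2.
Proof. by case/splitPr => s1 s2; exists s1, s2. Qed.

Definition qs (T : finType) (le : rel T) (a : T) : seq T :=
  sort le (enum [set b | le b a]).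

Lemma qs_mem (T : finType) (le : rel T) a b : (b \in qs le a) = le b a.
Proof. by rewrite mem_sort mem_enum inE. Qed.

Lemma qs_uniq (T : finType) (le : rel T) a : uniq (qs le a).
Proof. by rewrite sort_uniq enum_uniq. Qed.

Lemma qs_sorted (T : finType) (le : rel T) (Hf : is_forest le) a :
  sorted le (qs le a).
Proof.
case: Hf => _ _ _ _ hc.
apply: (sort_sorted_in (P := [pred b | le b a])).
  by move=> x y hx hy; exact: (hc a x y hx hy).
by apply/allP => x; rewrite mem_enum => h; rewrite inE in h.
Qed.

Lemma qs_size (T : finType) (le : rel T) (k : nat) (Hf : is_forest le)
  (Hh : height_le le k) a : 0 < size (qs le a) <= k.
Proof.
case: (Hf) => hr _ _ _ hc.
apply/andP; split.
  have : a \in qs le a by rewrite qs_mem hr.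
  by case: (qs le a) => [|? ?]; rewrite ?in_nil.
rewrite size_sort -cardE; apply: Hh => x y; rewrite !inE => hx hy.
exact: hc hx hy.
Qed.

Lemma qs_key (T : finType) (le : rel T) (Hf : is_forest le) a s1 b s2 :
  qs le a = s1 ++ b :: s2 -> qs le b = rcons s1 b.
Proof.
move=> E; case: (Hf) => hr ha ht _ _.
have S := qs_sorted Hf a; rewrite (sorted_pairwise ht) E pairwise_cat /= in S.
case/and3P: S => S1 S2 S3; case/andP: S3 => S3 S4.
have U := qs_uniq le a; rewrite E cat_uniq /= in U.
have hb : le b a by rewrite -qs_mem E mem_cat inE eqxx orbT.
apply: (sorted_eq ht ha (qs_sorted Hf b)).
  rewrite (sorted_pairwise ht) pairwise_rcons S2 andbT.
  by apply/allP => x hx; have /allrelP := S1; apply => //; rewrite inE eqxx.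
apply: uniq_perm; first exact: qs_uniq.
  rewrite rcons_uniq; case/and4P: U => -> + _ _; by rewrite negb_or => /andP [-> _].
move=> c; rewrite qs_mem mem_rcons inE; apply/idP/idP => [hc | ].
  have : c \in qs le a by rewrite qs_mem (ht _ _ _ hc hb).
  rewrite E mem_cat inE; case/or3P => [-> | -> | hc2]; rewrite ?orbT //.
  have hbc : le b c by move/allP: S3; apply.
  have e : c = b by apply: ha; rewrite hc hbc.
  by case/and4P: U => _ _ + _; rewrite -e hc2.
case/orP => [/eqP -> | hc]; first exact: hr.
by have /allrelP := S1; apply => //; rewrite inE eqxx.
Qed.

Lemma qs_last (T : finType) (le : rel T) (Hf : is_forest le) a y :
  last y (qs le a) = a.
Proof.
case: (Hf) => hr _ _ _ _.
have : a \in qs le a by rewrite qs_mem hr.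
case/in_split => s1 [s2 E].
by rewrite (qs_key Hf E) last_rcons.
Qed.

Lemma qs_nth (T : finType) (le : rel T) (Hf : is_forest le) a x0 i :
  i < size (qs le a) -> qs le (nth x0 (qs le a) i) = take i.+1 (qs le a).
Proof.
move=> hi; rewrite (take_nth x0 hi); apply: (qs_key Hf (a := a) (s2 := drop i.+1 (qs le a))).
by rewrite -drop_nth // cat_take_drop.
Qed.

Lemma qs_prefix (T : finType) (le : rel T) (Hf : is_forest le) a b :
  prefix (qs le a) (qs le b) = le a b.
Proof.
case: (Hf) => hr _ _ _ _.
apply/idP/idP => [/prefixP [u e] | h].
  rewrite -qs_mem e mem_cat; apply/orP; left.
  have : a \in qs le a by rewrite qs_mem hr.
  by case: (qs le a) => [|? ?]; rewrite ?in_nil.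
have : a \in qs le b by rewrite qs_mem.
case/in_split => s1 [s2 E]; rewrite (qs_key Hf E) E -cat_rcons.
by apply/prefixP; exists s2.
Qed.

Definition alpha_of (s : vocab) (T : finType) (A : structure s T) (k : nat) (le : rel T)
  (H : forest_cover A le /\ height_le le k) : T -> Ek T k :=
  fun a => exist _ (qs le a) (qs_size H.1.1 H.2 a).

Lemma alpha_of_ok (s : vocab) (T : finType) (A : structure s T) (k : nat) (le : rel T)
  (H : forest_cover A le /\ height_le le k) : Ek_coalgebra A (alpha_of H).
Proof.
have Hf := H.1.1; have Hc := H.1.2.
have epsK : forall a, eps (alpha_of H a) = a.
  by move=> a; rewrite (eps_last _ a) /= (qs_last Hf).
split => //.
- move=> R t At; split.
    move=> i j; rewrite !tnth_map /=.
    case: (eqVneq i j) => [-> | ij]; first by left; exists [::]; rewrite cats0.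
    have /orP [h | h] : le (tnth t i) (tnth t j) || le (tnth t j) (tnth t i).
      by apply: Hc; exists R, t, i, j.
    + by left; apply/prefixP; rewrite qs_prefix.
    + by right; apply/prefixP; rewrite qs_prefix.
  suff -> : map_tuple (@eps T k) (map_tuple (alpha_of H) t) = t by [].
  by apply: eq_from_tnth => i; rewrite !tnth_map epsK.
- move=> a; apply: Ek_eq => /=.
  apply: (@inj_map _ _ val); first exact: val_inj.
  rewrite (pmap_filter (@insubK _ _ _)) (eq_filter (isSome_insub _)).
  rewrite filter_prefixes; last exact: (qs_size Hf H.2 a).
  rewrite -map_comp; apply/esym/(prefixes_eq (x0 := a)) => i hi /=.
  exact: qs_nth.
Qed.

Definition Ffun (s : vocab) (T : finType) (A : structure s T) (k : nat)
  (x : {alpha : T -> Ek T k | Ek_coalgebra A alpha}) :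
  {le : rel T | forest_cover A le /\ height_le le k} :=
  exist _ (le_of (sval x)) (le_of_ok (svalP x)).

Definition Gfun (s : vocab) (T : finType) (A : structure s T) (k : nat)
  (y : {le : rel T | forest_cover A le /\ height_le le k}) :
  {alpha : T -> Ek T k | Ek_coalgebra A alpha} :=
  exist _ (alpha_of (svalP y)) (alpha_of_ok (svalP y)).

Theorem theorem4 (s : vocab) (T : finType) (A : structure s T) (k : nat) (hk : 0 < k) :
  exists f : {alpha : T -> Ek T k | Ek_coalgebra A alpha} ->
             {le : rel T | forest_cover A le /\ height_le le k},
    bijective f.
Proof.
exists (@Ffun s T A k); exists (@Gfun s T A k).
- case=> alpha H; apply: sig_eq => /=.
  apply: functional_extensionality => a; apply: Ek_eq => /=.
  have Hf := (le_of_ok H).1.1; case: (Hf) => _ ha ht _ _.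
  apply: (sorted_eq ht ha (qs_sorted Hf a) (coal_sorted H a)).
  apply: uniq_perm; [exact: qs_uniq | exact: (coal_uniq H) |].
  by move=> b; rewrite qs_mem (coal_mem H).
- case=> le H; apply: sig_eq => /=.
  apply: functional_extensionality => a; apply: functional_extensionality => b.
  by rewrite /le_of /= (qs_prefix H.1.1).
Qed.
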